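(* Let $n_{\mathrm w},m\in\mathbb{N}$, let $\gamma:\mathbb{R}^{n_{\mathrm w}}\to\mathbb{R}$ be a convex piecewise quadratic function, and let $\bar A\in\mathbb{R}^{m}$, $\bar B\in\mathbb{R}^{m\times n_{\mathrm w}}$, $\bar C\in\mathbb{R}^{m}$. Let $N\ge 1$ and $Z_0<Z_1<\dots<Z_N$ be real numbers, and let $\varphi:\mathbb{R}\to\mathbb{R}$ be a convex piecewise quadratic function on $[Z_0,Z_N]$ of the form $$\varphi(z)=\tfrac12 h_r z^2+f_r z+g_r\quad \text{if } z\in[Z_{r-1},Z_r],\ r\in\{1,\dots,N\},$$ with $h_r,f_r,g_r\in\mathbb{R}$ such that for every $r\in\{1,\dots,N-1\}$: $h_r>0$ or $[f_r\ g_r]\neq[f_{r+1}\ g_{r+1}]$. Consider the optimization problem $$\min_{w,y_1,\dots,y_N}\ \gamma(w)+\varphi(Z_0)+\sum_{r=1}^N\big[\varphi(y_r)-\varphi(Z_{r-1})\big]$$ subject to $Z_{r-1}\le y_r\le Z_r$ for $r=1,\dots,N$, and $\bar A\big[Z_0+\sum_{r=1}^N (y_r-Z_{r-1})\big]+\bar B w\le \bar C$. Let $w^*,y_1^*,\dots,y_N^*$ be an optimizer of this problem. Then: (i) for every $r\in\{2,\dots,N\}$, if $y_r^*>Z_{r-1}$ then $y_s^*=Z_s$ for all $s=1,\dots,r-1$; (ii) for every $r\in\{1,\dots,N-1\}$, if $y_r^*=Z_{r-1}$ then $y_s^*=Z_{s-1}$ for all $s=r+1,\dots,N$; (iii) with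 $z^*:=Z_0+\sum_{r=1}^N (y_r^*-Z_{r-1})$, the pair $(w^*,z^* )$ is an optimizer of the problem $$\min_{w,z}\ \gamma(w)+\varphi(z)\quad\text{s.t.}\quad Z_0\le z\le Z_N,\quad \bar A z+\bar B w\le \bar C.$$ *)

(* Defs.v *)
From HB Require Import structures.
From mathcomp Require Import all_boot all_order all_algebra.
From mathcomp Require Import reals.
Set Implicit Arguments. Unset Strict Implicit. Unset Printing Implicit Defensive.
Import Order.TTheory GRing.Theory Num.Theory.
Local Open Scope ring_scope.

Section Defs.
Variable R : realType.

Definition convex_fun (n : nat) (f : 'cV[R]_n -> R) : Prop :=
  forall (x y : 'cV[R]_n) (t : R), 0 <= t -> t <= 1 ->
    f (t *: x + (1 - t) *: y) <= t * f x + (1 - t) * f y.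

Definition convex_on (a b : R) (f : R -> R) : Prop :=
  forall x y t : R, a <= x -> x <= b -> a <= y -> y <= b -> 0 <= t -> t <= 1 ->
    f (t * x + (1 - t) * y) <= t * f x + (1 - t) * f y.

Definition piecewise_quadratic (n : nat) (f : 'cV[R]_n -> R) : Prop :=
  exists (K p : nat) (G : 'I_K -> 'M[R]_(p, n)) (k : 'I_K -> 'cV[R]_p)
         (Q : 'I_K -> 'M[R]_n) (c : 'I_K -> 'cV[R]_n) (d : 'I_K -> R),
    (forall x : 'cV[R]_n, exists i : 'I_K, forall j : 'I_p, (G i *m x) j 0 <= k i j 0) /\
    (forall (i : 'I_K) (x : 'cV[R]_n), (forall j : 'I_p, (G i *m x) j 0 <= k i j 0) ->
       f x = 2^-1 * (x^T *m (Q i) *m x) 0 0 + ((c i)^T *m x) 0 0 + d i).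

Definition lin_con (m nw : nat) (Abar : 'cV[R]_m) (Bbar : 'M[R]_(m, nw))
  (Cbar : 'cV[R]_m) (z : R) (w : 'cV[R]_nw) : Prop :=
  forall i : 'I_m, Abar i 0 * z + (Bbar *m w) i 0 <= Cbar i 0.

Definition zsum (N : nat) (Z y : nat -> R) : R :=
  Z 0%N + \sum_(1 <= r < N.+1) (y r - Z r.-1).

Definition feas1 (m nw N : nat) (Abar : 'cV[R]_m) (Bbar : 'M[R]_(m, nw))
  (Cbar : 'cV[R]_m) (Z : nat -> R) (w : 'cV[R]_nw) (y : nat -> R) : Prop :=
  (forall r, (1 <= r <= N)%N -> Z r.-1 <= y r /\ y r <= Z r) /\
  lin_con Abar Bbar Cbar (zsum N Z y) w.

Definition obj1 (nw N : nat) (gamma : 'cV[R]_nw -> R) (phi : R -> R)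
  (Z : nat -> R) (w : 'cV[R]_nw) (y : nat -> R) : R :=
  gamma w + phi (Z 0%N) + \sum_(1 <= r < N.+1) (phi (y r) - phi (Z r.-1)).

Definition feas2 (m nw N : nat) (Abar : 'cV[R]_m) (Bbar : 'M[R]_(m, nw))
  (Cbar : 'cV[R]_m) (Z : nat -> R) (w : 'cV[R]_nw) (z : R) : Prop :=
  Z 0%N <= z /\ z <= Z N /\ lin_con Abar Bbar Cbar z w.

End Defs.

(* Main.v *)
Require Import Defs.
From HB Require Import structures.
From mathcomp Require Import all_boot all_order all_algebra.
From mathcomp Require Import reals.
Import Order.TTheory GRing.Theory Num.Theory.
Local Open Scope ring_scope.
From mathcomp Require Import ring lra zify.

Section Cvx.
Variable R : realType.
Variable phi : R -> R.
Variables a0 b0 : R.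
Hypothesis cvx : convex_on a0 b0 phi.

Definition S x y := (phi y - phi x) / (y - x).

Lemma C3 x y z : a0 <= x -> x < y -> y < z -> z <= b0 ->
  phi y * (z - x) <= (z - y) * phi x + (y - x) * phi z.
Proof.
move=> ha xy yz zb.
have zx : 0 < z - x by rewrite subr_gt0; apply: lt_trans yz.
have zx0 : z - x != 0 by rewrite gt_eqF.
set t := (z - y) / (z - x).
have ht0 : 0 <= t by rewrite /t divr_ge0 //; lra.

have ht1 : t <= 1 by rewrite /t ler_pdivrMr // mul1r; lra.
have hy : t * x + (1 - t) * z = y by rewrite /t; field; exact: zx0.
have := @cvx x z t ha _ _ zb ht0 ht1.
rewrite hy => H.
have {}H : phi y <= t * phi x + (1 - t) * phi z by apply: H; lra.
have H2 : phi y * (z - x) <= (t * phi x + (1 - t) * phi z) * (z - x).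
  by rewrite ler_pM2r.
have E : (t * phi x + (1 - t) * phi z) * (z - x) = (z - y) * phi x + (y - x) * phi z.
  by rewrite /t; field; exact: zx0.
by rewrite -E.
Qed.

Lemma S_le1 x y z : a0 <= x -> x < y -> y < z -> z <= b0 -> S x y <= S x z.
Proof.
move=> ha xy yz zb; have := @C3 x y z ha xy yz zb => H.
have p1 : 0 < y - x by lra.
have p2 : 0 < z - x by lra.
have p3 : 0 < z - y by lra.
rewrite /S ler_pdivrMr // mulrAC ler_pdivlMr //.
nra.
Qed.

Lemma S_le2 x y z : a0 <= x -> x < y -> y < z -> z <= b0 -> S x z <= S y z.
Proof.
move=> ha xy yz zb; have := @C3 x y z ha xy yz zb => H.
have p1 : 0 < y - x by lra.
have p2 : 0 < z - x by lra.
have p3 : 0 < z - y by lra.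
rewrite /S ler_pdivrMr // mulrAC ler_pdivlMr //.
nra.
Qed.

Lemma S_mono x1 y1 x2 y2 : a0 <= x1 -> x1 < y1 -> x2 < y2 -> x1 <= x2 -> y1 <= y2 ->
  y2 <= b0 -> S x1 y1 <= S x2 y2.
Proof.
move=> ha h1 h2 hx hy hb.
apply: (@le_trans _ _ (S x1 y2)).
  case: (ltrP y1 y2) => [lt|ge]; first by apply: S_le1.
  by have -> : y1 = y2 by apply/eqP; rewrite eq_le hy ge.
case: (ltrP x1 x2) => [lt|ge]; first by apply: S_le2 => //; lra.
by have -> : x1 = x2 by apply/eqP; rewrite eq_le hx ge.
Qed.
End Cvx.
Arguments S {R}.
Section Sums.
Variable R : realType.

Lemma S_quad (phi : R -> R) (h f g x y : R) : x < y ->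
  (forall z, x <= z -> z <= y -> phi z = 2^-1 * h * z ^+ 2 + f * z + g) ->
  S phi x y = 2^-1 * h * (x + y) + f.
Proof.
move=> xy hq; rewrite /S (hq x) ?lexx ?ltW // (hq y) ?lexx ?ltW //.
have yx0 : y - x != 0 by rewrite subr_eq0 gt_eqF.
field; exact: yx0.
Qed.

Lemma Zmono (N : nat) (Z : nat -> R) : (forall r, (r < N)%N -> Z r < Z r.+1) ->
  forall i j, (i <= j)%N -> (j <= N)%N -> Z i <= Z j.
Proof.
move=> hZ i j; elim: j => [|j IH] hij hjN.
  by move: hij; rewrite leqn0 => /eqP ->.
case: (ltngtP i j.+1) hij => // [hlt|->] _; last by [].
apply: le_trans (IH _ _) (ltW (hZ _ _)) => //; exact: ltnW.
Qed.

Definition ys (Z : nat -> R) (k : nat) (v : R) (t : nat) : R :=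
  if (t < k)%N then Z t else if t == k then v else Z t.-1.

Lemma tele (F : R -> R) (Z : nat -> R) k v n : (0 < k)%N ->
  \sum_(1 <= r < n.+1) (F (ys Z k v r) - F (Z r.-1)) =
  F (if (n < k)%N then Z n else v) - F (Z 0%N).
Proof.
move=> hk; elim: n => [|n IH]; first by rewrite big_geq // hk subrr.
rewrite big_nat_recr //= IH /ys.
by case: (ltngtP n.+1 k) => h /=; lra.
Qed.

Definition upd (y : nat -> R) (s : nat) (v : R) (t : nat) : R :=
  if t == s then v else y t.

Lemma sum_upd (G : R -> R) (Z : nat -> R) y s v N : (1 <= s <= N)%N ->
  \sum_(1 <= t < N.+1) (G (upd y s v t) - G (Z t.-1)) =
  \sum_(1 <= t < N.+1) (G (y t) - G (Z t.-1)) + (G v - G (y s)).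
Proof.
move=> hs.
have hin : s \in index_iota 1 N.+1 by rewrite mem_index_iota ltnS.
rewrite (bigD1_seq s) ?iota_uniq //= [in RHS](bigD1_seq s) ?iota_uniq //=.
rewrite /upd eqxx.
rewrite (eq_bigr (fun t => G (y t) - G (Z t.-1))) => [|t /negbTE ->] //.
lra.
Qed.

Lemma find_k (Z : nat -> R) z : forall n, (1 <= n)%N -> Z 0%N <= z -> z <= Z n ->
  exists k, (1 <= k <= n)%N /\ Z k.-1 <= z /\ z <= Z k.
Proof.
elim=> [|n IH] // _ h0 hn.
case: n IH hn => [|n] IH hn; first by exists 1%N.
case: (lerP z (Z n.+1)) => hz.
  have [k [hk1 hk2]] := IH isT h0 hz.
  exists k; split => //; case/andP: hk1 => -> /= ?; exact: leqW.
exists n.+2; split => //=; split => //; exact: ltW.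
Qed.
End Sums.
Arguments S_quad {R}. Arguments Zmono {R N Z}. Arguments ys {R}. Arguments tele {R}. Arguments upd {R}. Arguments sum_upd {R}. Arguments find_k {R}.

Ltac nlia := repeat match goal with
  | H : ?T |- _ => lazymatch T with
       | is_true (leq _ _) => fail
       | is_true (andb _ _) => fail
       | @eq nat _ _ => fail
       | _ => clear H end end; lia.

Theorem theorem2 (R : realType) (nw m : nat) (gamma : 'cV[R]_nw -> R)
  (Abar : 'cV[R]_m) (Bbar : 'M[R]_(m, nw)) (Cbar : 'cV[R]_m)
  (N : nat) (Z : nat -> R) (phi : R -> R) (h f g : nat -> R)
  (wstar : 'cV[R]_nw) (ystar : nat -> R) :
  convex_fun gamma -> piecewise_quadratic gamma ->
  (1 <= N)%N ->
  (forall r, (r < N)%N -> Z r < Z r.+1) ->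
  convex_on (Z 0%N) (Z N) phi ->
  (forall r z, (1 <= r <= N)%N -> Z r.-1 <= z -> z <= Z r ->
     phi z = 2^-1 * h r * z ^+ 2 + f r * z + g r) ->
  (forall r, (1 <= r <= N.-1)%N -> 0 < h r \/ (f r, g r) <> (f r.+1, g r.+1)) ->
  feas1 N Abar Bbar Cbar Z wstar ystar ->
  (forall w y, feas1 N Abar Bbar Cbar Z w y ->
     obj1 N gamma phi Z wstar ystar <= obj1 N gamma phi Z w y) ->
  (forall r, (2 <= r <= N)%N -> Z r.-1 < ystar r ->
     forall s, (1 <= s <= r.-1)%N -> ystar s = Z s) /\
  (forall r, (1 <= r <= N.-1)%N -> ystar r = Z r.-1 ->
     forall s, (r.+1 <= s <= N)%N -> ystar s = Z s.-1) /\
  (feas2 N Abar Bbar Cbar Z wstar (zsum N Z ystar) /\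
   forall w z, feas2 N Abar Bbar Cbar Z w z ->
     gamma wstar + phi (zsum N Z ystar) <= gamma w + phi z).
Proof.
move=> cvxg pqg hN hZ cvx hphi hfg [hb hlin] hopt.
have Zm := Zmono hZ.
have Zlt : forall i j, (i < j)%N -> (j <= N)%N -> Z i < Z j.
  move=> i j ij jN; apply: (lt_le_trans (hZ i (leq_trans ij jN))); apply: Zm => //.
have mono := @S_mono R phi (Z 0%N) (Z N) cvx.
have hi : forall r, (2 <= r <= N)%N -> Z r.-1 < ystar r ->
     forall s, (1 <= s <= r.-1)%N -> ystar s = Z s.
  move=> r /andP[r2 rN] hyr s /andP[s1 sr].
  have sN : (1 <= s <= N)%N by apply/andP; split => //; nlia.
  have rN' : (1 <= r <= N)%N by apply/andP; split => //; nlia.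
  have [hs1 hs2] := hb s sN.
  have [hr1 hr2] := hb r rN'.
  remember (ystar s) as a eqn:aE.
  apply/eqP; rewrite eq_le hs2 /= leNgt; apply/negP => has.
  have [d [d0 [d1 d2]]] : exists d, 0 < d /\ d <= Z s - a /\ d <= ystar r - Z r.-1.
    by case: (lerP (Z s - a) (ystar r - Z r.-1)) => hh;
      [exists (Z s - a) | exists (ystar r - Z r.-1)]; lra.
  have Zsr : Z s <= Z r.-1 by apply: Zm; nlia.
  have Zs1 : Z s < Z s.+1 by apply: hZ; nlia.
  have Z0a : Z 0%N <= Z s.-1 by apply: Zm; nlia.
  have yrN : Z r <= Z N by apply: Zm; nlia.
  have rs : (r == s) = false by apply: gtn_eqF; nlia.
  set y' := upd (upd ystar s (a + d)) r (ystar r - d).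
  have E1 := sum_upd (fun x => x) Z (upd ystar s (a + d)) r (ystar r - d) N rN'.
  have E2 := sum_upd (fun x => x) Z ystar s (a + d) N sN.
  simpl in E1, E2.
  have Zeq : zsum N Z y' = zsum N Z ystar.
    rewrite /zsum /y' E1 E2 /upd rs -aE; lra.
  have feas' : feas1 N Abar Bbar Cbar Z wstar y'.
    split; last by rewrite Zeq.
    move=> t ht; have [ht1 ht2] := hb t ht; rewrite /y' /upd.
    case: eqP => [->|_]; first by split; lra.
    case: eqP => [->|_]; last by [].
    by split; lra.
  have := hopt _ _ feas'.
  rewrite /obj1 /y' (sum_upd phi Z _ _ _ _ rN') (sum_upd phi Z _ _ _ _ sN) /upd rs -aE => Hopt.
  set b := ystar r - d.
  have yrb : ystar r = b + d by rewrite /b; lra.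
  have hD : phi (b + d) - phi b <= phi (a + d) - phi a by rewrite -yrb; lra.
  have hsig : S phi b (b + d) <= S phi a (a + d).
    have e1 : b + d - b = d by lra.
    have e2 : a + d - a = d by lra.
    by rewrite /S e1 e2; apply: ler_wpM2r => //; rewrite invr_ge0 ltW.
  clear Hopt hD E1 E2 Zeq feas' hopt hlin cvxg pqg.
  have hqs : forall z, a <= z -> z <= a + d ->
      phi z = 2^-1 * h s * z ^+ 2 + f s * z + g s.
    by move=> z z1 z2; apply: hphi => //; lra.
  have [e [ce [eZ ey]]] : exists e, Z s < e /\ e <= Z s.+1 /\ e <= ystar r.
    by case: (lerP (Z s.+1) (ystar r)) => hh; [exists (Z s.+1) | exists (ystar r)]; lra.
  have hqs1 : forall z, Z s <= z -> z <= e ->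
      phi z = 2^-1 * h s.+1 * z ^+ 2 + f s.+1 * z + g s.+1.
    move=> z z1 z2; apply: hphi; [apply/andP; split => //; nlia | exact: z1 | lra].
  have yrZ : ystar r <= Z N by apply: le_trans hr2 yrN.
  have F1 : Z 0%N <= a by clear -Z0a hs1; lra.
  have F2 : a < a + d by clear -d0; lra.
  have F3 : a + d / 2 < a + d by clear -d0; lra.
  have F4 : a <= a + d / 2 by clear -d0; lra.
  have F5 : a + d <= Z N by clear -d1 Zsr hr1 yrZ; lra.
  have F6 : a + d / 2 <= b by clear -d0 d1 d2 Zsr yrb; lra.
  have F7 : a + d <= b + d by clear -d0 d1 d2 Zsr yrb; lra.
  have F8 : b + d <= Z N by clear -yrb yrZ; lra.
  have F9 : Z s <= b by clear -d2 Zsr yrb; lra.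
  have F10 : e <= b + d by clear -ey yrb; lra.
  have F11 : a <= Z s by clear -has; lra.
  have F12 : a + d <= e by clear -d1 ce; lra.
  have F13 : Z s < (Z s + e) / 2 by clear -ce; lra.
  have F14 : a + d <= (Z s + e) / 2 by clear -d1 ce; lra.
  have F15 : (Z s + e) / 2 <= b + d by clear -ce ey yrb; lra.
  have F16 : Z 0%N <= a + d / 2 by clear -Z0a hs1 d0; lra.
  have F17 : (Z s + e) / 2 <= e by clear -ce; lra.
  have F18 : e <= Z N by clear -ey yrZ; lra.
  have F19 : (Z s + e) / 2 <= Z N by clear -ce ey yrZ; lra.
  have F20 : Z 0%N <= Z s by clear -Z0a hs1 has; lra.
  have F21 : b < b + d by clear -d0; lra.
  have A1 : S phi a (a + d) <= S phi (a + d / 2) (a + d) by apply: mono.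
  have A2 : S phi (a + d / 2) (a + d) <= S phi b (b + d) by apply: mono.
  have B1 : S phi a (a + d) <= S phi (Z s) e by apply: mono.
  have B2 : S phi (Z s) e <= S phi b (b + d).
    by apply: mono.
  have C1 : S phi a (a + d) <= S phi (Z s) ((Z s + e) / 2) by apply: mono.
  have C2 : S phi (Z s) ((Z s + e) / 2) <= S phi b (b + d).
    by apply: mono.
  have Qa : S phi a (a + d) = 2^-1 * h s * (a + (a + d)) + f s.
    by apply: (S_quad phi (h s) (f s) (g s)) => // z z1 z2; apply: hqs.
  have Qp : S phi (a + d / 2) (a + d) = 2^-1 * h s * (a + d / 2 + (a + d)) + f s.
    by apply: (S_quad phi (h s) (f s) (g s)) => // z z1 z2; apply: hqs => //; apply: le_trans F4 z1.
  have Qe : S phi (Z s) e = 2^-1 * h s.+1 * (Z s + e) + f s.+1.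
    by apply: (S_quad phi (h s.+1) (f s.+1) (g s.+1)) => // z z1 z2; apply: hqs1.
  have Qm : S phi (Z s) ((Z s + e) / 2) = 2^-1 * h s.+1 * (Z s + (Z s + e) / 2) + f s.+1.
    by apply: (S_quad phi (h s.+1) (f s.+1) (g s.+1)) => // z z1 z2; apply: hqs1 => //; apply: le_trans z2 F17.
  rewrite Qa in A1 B1 C1 hsig.
  rewrite Qp in A1 A2.
  rewrite Qe in B1 B2.
  rewrite Qm in C1 C2.
  have hs0 : h s = 0.
    have X : 2^-1 * h s * (a + (a + d)) + f s = 2^-1 * h s * (a + d / 2 + (a + d)) + f s.
      by apply/le_anti; rewrite A1 /= (le_trans A2 hsig).
    have : h s * d = 4 * ((2^-1 * h s * (a + d / 2 + (a + d)) + f s) - (2^-1 * h s * (a + (a + d)) + f s)).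
      by field.
    rewrite -X subrr mulr0.
    by move/eqP; rewrite mulf_eq0 (gt_eqF d0) orbF => /eqP.
  have hs10 : h s.+1 = 0.
    have X : 2^-1 * h s.+1 * (Z s + e) + f s.+1 = 2^-1 * h s.+1 * (Z s + (Z s + e) / 2) + f s.+1.
      apply/le_anti; apply/andP; split.
      - exact: le_trans (le_trans B2 hsig) C1.
      - exact: le_trans (le_trans C2 hsig) B1.
    have : h s.+1 * (e - Z s) = 4 * ((2^-1 * h s.+1 * (Z s + e) + f s.+1) - (2^-1 * h s.+1 * (Z s + (Z s + e) / 2) + f s.+1)).
      by field.
    rewrite X subrr mulr0.
    have ed : 0 < e - Z s by lra.
    by move/eqP; rewrite mulf_eq0 (gt_eqF ed) orbF => /eqP.
  rewrite hs0 hs10 in B1 B2 hsig.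
  have fe : f s = f s.+1 by lra.
  have P1 := hphi s (Z s) sN (ltac:(apply: Zm; nlia)) (lexx _).
  have P2 := hqs1 (Z s) (lexx _) (ltW ce).
  rewrite hs0 in P1; rewrite hs10 in P2.
  have ge : g s = g s.+1 by rewrite P1 fe in P2; lra.
  have sN1 : (1 <= s <= N.-1)%N by apply/andP; split => //; nlia.
  case: (hfg s sN1) => [|ne]; first by rewrite hs0 ltxx.
  by apply: ne; rewrite fe ge.
have hii : forall r, (1 <= r <= N.-1)%N -> ystar r = Z r.-1 ->
     forall s, (r.+1 <= s <= N)%N -> ystar s = Z s.-1.
  move=> r /andP[r1 rN] hyr s /andP[rs sN].
  have [h1 h2] := hb s (ltac:(apply/andP; split => //; nlia)).
  apply/eqP; rewrite eq_le h1 andbT leNgt; apply/negP => hlt.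
  have E := hi s (ltac:(apply/andP; split => //; nlia)) hlt r (ltac:(apply/andP; split => //; nlia)).
  have := Zlt r.-1 r (ltac:(nlia)) (ltac:(nlia)).
  by rewrite -E hyr ltxx.
have [k [v [hk [hv1 [hv2 hys]]]]] : exists k v, (1 <= k <= N)%N /\ Z k.-1 <= v /\
    v <= Z k /\ forall t, (1 <= t <= N)%N -> ystar t = ys Z k v t.
  pose P := fun i => (1 <= i <= N)%N && (Z i.-1 < ystar i).
  case: (boolP (has P (index_iota 1 N.+1))) => [/hasP [i _ Pi] | /hasPn hn].
  - have exP : exists i, P i by exists i.
    have ubP : forall i, P i -> (i <= N)%N by move=> j /andP[/andP[_ ?] _].
    case: (ex_maxnP exP ubP) => k /andP[hk hlt] kmax.
    have [hk1 hk2] := hb k hk.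
    exists k, (ystar k); do 3 split => //.
    move=> t ht; rewrite /ys; case: ltngtP => htk.
    + apply: (hi k _ hlt t); apply/andP; split; nlia.
    + have [h1 h2] := hb t ht.
      apply/eqP; rewrite eq_le h1 andbT leNgt; apply/negP => hl.
      have := kmax t; rewrite /P ht hl => /(_ isT); nlia.
    + by rewrite htk.
  - have h1N : (1 <= 1 <= N)%N by apply/andP; split.
    have [hk1 hk2] := hb 1%N h1N.
    exists 1%N, (ystar 1%N); do 3 split => //.
    move=> t ht; rewrite /ys; case: ltngtP => htk.
    + nlia.
    + have [h1 h2] := hb t ht.
      have := hn t; rewrite mem_index_iota ltnS ht /P ht /= -leNgt => /(_ isT) hl.
      by apply/eqP; rewrite eq_le hl h1.
    + by rewrite htk.
have kN : (k <= N)%N by case/andP: hk.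
have k0 : (0 < k)%N by case/andP: hk.
have sumy : forall F : R -> R,
    \sum_(1 <= t < N.+1) (F (ystar t) - F (Z t.-1)) = F v - F (Z 0%N).
  move=> F; rewrite (eq_big_nat _ _ (F2 := fun t => F (ys Z k v t) - F (Z t.-1))); last first.
    by move=> t ht; rewrite hys //; nlia.
  by rewrite tele // ltnNge kN.
have zs : zsum N Z ystar = v.
  have := sumy (fun x => x); simpl => E; rewrite /zsum E; lra.
split; first exact: hi.
split; first exact: hii.
split.
  rewrite zs; split; [|split].
  - exact: le_trans (Zm 0%N k.-1 (leq0n _) (ltac:(nlia))) hv1.
  - exact: le_trans hv2 (Zm k N kN (leqnn N)).
  - by rewrite -zs.
move=> w z [hz0 [hzN hl]].
have [k' [hk' [hz1 hz2]]] := @find_k R Z z N hN hz0 hzN.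
have kN' : (k' <= N)%N by case/andP: hk'.
have k0' : (0 < k')%N by case/andP: hk'.
have feas'' : feas1 N Abar Bbar Cbar Z w (ys Z k' z).
  split.
  - move=> t ht; rewrite /ys; case: ltngtP => htk.
    + by split; [apply: Zm; nlia | exact: lexx].
    + by split; [exact: lexx | apply: Zm; nlia].
    + by rewrite -htk in hz1 hz2.
  - have := tele (fun x => x) Z k' z N k0'; simpl => E.
    by rewrite /lin_con /zsum E ltnNge kN' /= addrC subrK.
have H := hopt w _ feas''.
move: H; rewrite /obj1 sumy tele // ltnNge kN' /= zs => H; clear -H; lra.
Qed.
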